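(* Let $0\le \mu<L<\infty$, $q=\mu/L$, and let $f\in\mathcal{F}_{\mu,L}(\mathbb{R}^d)$ admit a minimizer $x_\star$, with $f_\star=f(x_\star)$. For any $x_0=z_0\in\mathbb{R}^d$ and any integer $N\ge 1$, the iterates of the Information-Theoretic Exact Method (ITEM) satisfy \[ \|z_N-x_\star\|^2 \le \frac{1}{1+qA_N}\|z_0-x_\star\|^2\le \frac{(1-\sqrt{q})^{2N}}{(1-\sqrt{q})^{2N}+q}\|z_0-x_\star\|^2, \] \[ \psi_N \le \frac{L}{(1-q)A_{N+1}}\|z_0-x_\star\|^2\le \min\left\{(1-\sqrt{q})^{2(N+1)},\frac{1}{(N+1)^2}\right\}\frac{L}{1-q}\|z_0-x_\star\|^2, \] where $\psi_k=f(y_k)-f_\star-\tfrac{1}{2L}\|\nabla f(y_k)\|^2-\tfrac{\mu}{2(1-\mu/L)}\|y_k-\tfrac1L\nabla f(y_k)-x_\star\|^2$, and moreover $\psi_k\ge 0$.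
   Context: $\mathcal{F}_{\mu,L}(\mathbb{R}^d)$ denotes the set of proper closed convex functions $f:\mathbb{R}^d\to\mathbb{R}$ such that for all $x,y$: $f(x)\le f(y)+\langle\nabla f(y);x-y\rangle+\frac L2\|x-y\|^2$ and $f(x)\ge f(y)+\langle\nabla f(y);x-y\rangle+\frac\mu2\|x-y\|^2$. ITEM: given $x_0$, set $z_0=x_0$, $A_0=0$, $q=\mu/L$, and for $k=0,1,\dots$: $A_{k+1}=\frac{(1+q)A_k+2\left(1+\sqrt{(1+A_k)(1+qA_k)}\right)}{(1-q)^2}$, $\beta_k=\frac{A_k}{(1-q)A_{k+1}}$, $\delta_k=\frac12\frac{(1-q)^2A_{k+1}-(1+q)A_k}{1+q+qA_k}$, $y_k=(1-\beta_k)z_k+\beta_k x_k$, $x_{k+1}=y_k-\frac1L\nabla f(y_k)$, $z_{k+1}=(1-q\delta_k)z_k+q\delta_k y_k-\frac{\delta_k}{L}\nabla f(y_k)$. *)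

(* Defs.v *)
From HB Require Import structures.
From mathcomp Require Import all_boot all_order all_algebra.
From mathcomp Require Import all_classical all_reals all_analysis.
Set Implicit Arguments. Unset Strict Implicit. Unset Printing Implicit Defensive.
Import Order.TTheory GRing.Theory Num.Theory.
Import numFieldNormedType.Exports.
Local Open Scope ring_scope.

Definition dot (R : realType) (d : nat) (u v : 'rV[R]_d) : R :=
  \sum_(i < d) u ord0 i * v ord0 i.

Definition sqnorm (R : realType) (d : nat) (u : 'rV[R]_d) : R := dot u u.

Definition is_gradient (R : realType) (d : nat)
  (f : 'rV[R]_d -> R) (g : 'rV[R]_d -> 'rV[R]_d) : Prop :=
  forall x : 'rV[R]_d, differentiable f x /\
    forall v : 'rV[R]_d, 'd f x v = dot (g x) v.

Definition convex_fun (R : realType) (d : nat) (f : 'rV[R]_d -> R) : Prop :=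
  forall (x y : 'rV[R]_d) (t : R), 0 <= t -> t <= 1 ->
    f ((1 - t) *: x + t *: y) <= (1 - t) * f x + t * f y.

(* f \in F_{mu,L}(R^d), with gradient g.  (f is real-valued hence proper;
   differentiable hence continuous, hence closed.) *)
Definition in_F (R : realType) (d : nat) (mu L : R)
  (f : 'rV[R]_d -> R) (g : 'rV[R]_d -> 'rV[R]_d) : Prop :=
  [/\ is_gradient f g, convex_fun f &
    forall x y : 'rV[R]_d,
      f x <= f y + dot (g y) (x - y) + L / 2 * sqnorm (x - y) /\
      f y + dot (g y) (x - y) + mu / 2 * sqnorm (x - y) <= f x].

Fixpoint item_A (R : realType) (q : R) (k : nat) : R :=
  match k with
  | 0%N => 0
  | k'.+1 =>
      let a := item_A q k' in
      ((1 + q) * a + 2 * (1 + Num.sqrt ((1 + a) * (1 + q * a)))) / (1 - q) ^+ 2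
  end.

Definition item_beta (R : realType) (q : R) (k : nat) : R :=
  item_A q k / ((1 - q) * item_A q k.+1).

Definition item_delta (R : realType) (q : R) (k : nat) : R :=
  (1 / 2) * (((1 - q) ^+ 2 * item_A q k.+1 - (1 + q) * item_A q k)
              / (1 + q + q * item_A q k)).

Fixpoint item_xz (R : realType) (d : nat) (mu L : R)
  (g : 'rV[R]_d -> 'rV[R]_d) (x0 : 'rV[R]_d) (k : nat) : 'rV[R]_d * 'rV[R]_d :=
  match k with
  | 0%N => (x0, x0)
  | k'.+1 =>
      let q := mu / L in
      let xk := (item_xz mu L g x0 k').1 in
      let zk := (item_xz mu L g x0 k').2 in
      let b := item_beta q k' in
      let dl := item_delta q k' in
      let yk := (1 - b) *: zk + b *: xk in
      (yk - L^-1 *: g yk,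
       (1 - q * dl) *: zk + (q * dl) *: yk - (dl / L) *: g yk)
  end.

Definition item_x (R : realType) (d : nat) (mu L : R)
  (g : 'rV[R]_d -> 'rV[R]_d) (x0 : 'rV[R]_d) (k : nat) : 'rV[R]_d :=
  (item_xz mu L g x0 k).1.

Definition item_z (R : realType) (d : nat) (mu L : R)
  (g : 'rV[R]_d -> 'rV[R]_d) (x0 : 'rV[R]_d) (k : nat) : 'rV[R]_d :=
  (item_xz mu L g x0 k).2.

Definition item_y (R : realType) (d : nat) (mu L : R)
  (g : 'rV[R]_d -> 'rV[R]_d) (x0 : 'rV[R]_d) (k : nat) : 'rV[R]_d :=
  let b := item_beta (mu / L) k in
  (1 - b) *: item_z mu L g x0 k + b *: item_x mu L g x0 k.

Definition item_psi (R : realType) (d : nat) (mu L : R)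
  (f : 'rV[R]_d -> R) (g : 'rV[R]_d -> 'rV[R]_d) (x0 xstar : 'rV[R]_d)
  (k : nat) : R :=
  let yk := item_y mu L g x0 k in
  f yk - f xstar - 1 / (2 * L) * sqnorm (g yk)
  - mu / (2 * (1 - mu / L)) * sqnorm (yk - L^-1 *: g yk - xstar).

(* Main.v *)
Require Import Defs.
From HB Require Import structures.
From mathcomp Require Import all_boot all_order all_algebra.
From mathcomp Require Import all_classical all_reals all_analysis.
From mathcomp Require Import ring lra.
Import Order.TTheory GRing.Theory Num.Theory.
Import numFieldNormedType.Exports.
Local Open Scope ring_scope.
Set Implicit Arguments.
Unset Strict Implicit.

Section Aux.
Variable R : realType.
Variable d : nat.

Ltac flat := rewrite /sqnorm /dot !mulr_sumr -?sumrN -!big_split /=;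
  apply: big1 => i _; rewrite !mxE.


Lemma interp (mu L : R) (f : 'rV[R]_d -> R) g x y : 0 <= mu -> mu < L -> in_F mu L f g ->
  f y + dot (g y) (x - y) + 1/(2*L) * sqnorm (g x - g y)
   + mu/(2*(1-mu/L)) * sqnorm (x - y - L^-1 *: (g x - g y)) <= f x.
Proof.
move=> mu0 muL [_ _ H].
have L0 : 0 < L by apply: le_lt_trans muL.
have M0 : L - mu != 0 by rewrite subr_eq0 gt_eqF.
have L0' : L != 0 by rewrite gt_eqF.
have q0 : 1 - mu/L != 0.
  by rewrite subr_eq0 eq_sym lt_eqF // ltr_pdivrMr // mul1r.
set w := x - (L - mu)^-1 *: (g x - g y - mu *: (x - y)).
have [_ H1] := H w y.
have [H2 _] := H w x.
have Hid : dot (g y) (w - y) + mu/2*sqnorm(w-y) - dot (g x) (w - x) - L/2*sqnorm(w-x)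
  - dot (g y) (x-y) - 1/(2*L)*sqnorm(g x - g y)
  - mu/(2*(1-mu/L))*sqnorm(x - y - L^-1 *:(g x - g y)) = 0.
  rewrite /sqnorm /dot !mulr_sumr -!sumrN -!big_split /=.
  apply: big1 => i _; rewrite /w !mxE.
  field.
  by rewrite L0' M0.
lra.
Qed.



Lemma step_abs (mu L q A A1 b dl fprev fy fs : R) (z x yp hp gy xs : 'rV[R]_d) :
  0 < L -> q = mu / L -> 0 <= q -> q < 1 -> 0 <= A -> A <= A1 ->
  b * ((1 - q) * A1) = A ->
  (1 + q*A) - (1 + q*A1)*(1 - q*dl)^+2 = 0 ->
  2*dl*(1 - q*dl)*(1 + q*A1) - ((1 - q)*A1 - A) = 0 ->
  A1 - (1 + q*A1)*dl^+2 = 0 ->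
  let y := (1 - b) *: z + b *: x in
  let z1 := (1 - q*dl) *: z + (q*dl) *: y - (dl / L) *: gy in
  A = 0 \/ (yp = x + L^-1 *: hp /\ fy + dot gy (yp - y) + 1/(2*L) * sqnorm (hp - gy)
    + mu/(2*(1-mu/L)) * sqnorm (yp - y - L^-1 *: (hp - gy)) <= fprev) ->
  fy + dot gy (xs - y) + 1/(2*L) * sqnorm (0 - gy)
    + mu/(2*(1-mu/L)) * sqnorm (xs - y - L^-1 *: (0 - gy)) <= fs ->
  (1 + q*A1) * sqnorm (z1 - xs) + (1-q)*A1/L * (fy - fs - 1/(2*L) * sqnorm gy
      - mu/(2*(1-mu/L)) * sqnorm (y - L^-1 *: gy - xs))
  <= (1 + q*A) * sqnorm (z - xs) + (1-q)*A/L * (fprev - fs - 1/(2*L) * sqnorm hp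
      - mu/(2*(1-mu/L)) * sqnorm (x - xs)).
Proof.
move=> L0 hq q0 q1 A0 AA1 hb ha hbb hc y z1 R1 R2.
have L0' : L != 0 by rewrite gt_eqF.
have q1' : 1 - q != 0 by rewrite subr_eq0 eq_sym lt_eqF.
have l1 : 0 <= (1-q)*A / L.
  by apply: divr_ge0; [apply: mulr_ge0; lra | lra].
have l2 : 0 <= (1-q)*(A1 - A) / L.
  by apply: divr_ge0; [apply: mulr_ge0; lra | lra].
set c' := mu/(2*(1-mu/L)).
have M0 : L - mu != 0.
  have : mu < L by move: q1; rewrite hq ltr_pdivrMr // mul1r.
  by move=> h; rewrite subr_eq0 gt_eqF.
have H1 : 0 <= (1-q)*A/L * (fprev - (fy + dot gy (x + L^-1 *: hp - y)
   + 1/(2*L) * sqnorm (hp - gy) + c' * sqnorm (x + L^-1 *: hp - y - L^-1 *: (hp - gy)))).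
  case: R1 => [-> | [hx R1]]; first by rewrite mulr0 mul0r mul0r.
  by apply: mulr_ge0 => //; rewrite subr_ge0 -hx.
move: R2; rewrite -subr_ge0 => /(mulr_ge0 l2) H2.
have HF : (1+q*A) * sqnorm (z - xs)
  + (-((1-q)*A/L*(1/(2*L)))) * sqnorm hp
  + (-((1-q)*A/L*c')) * sqnorm (x - xs)
  + (-(1+q*A1)) * sqnorm (z1 - xs)
  + ((1-q)*A1/L*(1/(2*L))) * sqnorm gy
  + ((1-q)*A1/L*c') * sqnorm (y - L^-1 *: gy - xs)
  + ((1-q)*A/L) * dot gy (x + L^-1 *: hp - y)
  + ((1-q)*A/L*(1/(2*L))) * sqnorm (hp - gy)
  + ((1-q)*A/L*c') * sqnorm (x + L^-1 *: hp - y - L^-1 *: (hp - gy))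
  + ((1-q)*(A1 - A)/L) * dot gy (xs - y)
  + ((1-q)*(A1 - A)/L*(1/(2*L))) * sqnorm (0 - gy)
  + ((1-q)*(A1 - A)/L*c') * sqnorm (xs - y - L^-1 *: (0 - gy)) = 0.
  flat.
  set Z := z ord0 i - xs ord0 i.
  set V := gy ord0 i / L - q * ((1 - b) * z ord0 i + b * x ord0 i - xs ord0 i).
  transitivity (((1 + q*A) - (1 + q*A1)*(1 - q*dl)^+2) * Z^+2
     + (2*dl*(1 - q*dl)*(1 + q*A1) - ((1 - q)*A1 - A)) * Z * V
     + (A1 - (1 + q*A1)*dl^+2) * V^+2); last first.
    by rewrite ha hbb hc; ring.
  rewrite /Z /V /c' -hb hq.
  field.
  by rewrite L0' M0.
rewrite -subr_ge0.
match type of H1 with is_true (_ <= ?a) => match type of H2 with is_true (_ <= ?b) =>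
 match type of HF with ?c = _ => match goal with |- is_true (_ <= ?e) =>
  have E : e = a + b + c end end end end.
  rewrite /c'. ring.
by rewrite E HF addr0 addr_ge0.
Qed.


Lemma scal (q A : R) : 0 <= q -> q < 1 -> 0 <= A ->
  let s := Num.sqrt ((1+A)*(1+q*A)) in
  let A1 := ((1+q)*A + 2*(1+s))/(1-q)^+2 in
  let dl := 1/2 * (((1-q)^+2 * A1 - (1+q)*A)/(1+q+q*A)) in
  [/\ (1 + q*A) - (1 + q*A1)*(1 - q*dl)^+2 = 0,
      2*dl*(1 - q*dl)*(1 + q*A1) - ((1 - q)*A1 - A) = 0 &
      A1 - (1 + q*A1)*dl^+2 = 0].
Proof.
move=> q0 q1 A0 s A1 dl.
have hs : s^+2 = (1+A)*(1+q*A) by rewrite sqr_sqrtr // mulr_ge0 //; nra.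
have E0 : 1+q+q*A != 0 by rewrite gt_eqF //; nra.
have q1' : 1 - q != 0 by rewrite subr_eq0 eq_sym lt_eqF.
have -> : (1 + q*A) - (1 + q*A1)*(1 - q*dl)^+2 =
  (3*q^+2 - 2*q^+3*s + 3*q^+3*A - q^+4 - q^+4*A) * (s^+2 - (1+A)*(1+q*A))
   / ((1-q)^+2 * (1+q+q*A)^+2).
  by rewrite /dl /A1; field; rewrite E0 q1'.
have -> : 2*dl*(1 - q*dl)*(1 + q*A1) - ((1 - q)*A1 - A) =
  (2*q - 4*q^+2 - 4*q^+2*s + 2*q^+2*A - 2*q^+3 - 2*q^+3*A) * (s^+2 - (1+A)*(1+q*A))
   / ((1-q)^+2 * (1+q+q*A)^+2).
  by rewrite /dl /A1; field; rewrite E0 q1'.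
have -> : A1 - (1 + q*A1)*dl^+2 =
  (-1 - 4*q - 2*q*s - q*A - q^+2 - q^+2*A) * (s^+2 - (1+A)*(1+q*A))
   / ((1-q)^+2 * (1+q+q*A)^+2).
  by rewrite /dl /A1; field; rewrite E0 q1'.
by rewrite hs subrr !mulr0 !mul0r.
Qed.



Lemma itemA_S (q : R) k : item_A q k.+1 =
  ((1+q)*item_A q k + 2*(1 + Num.sqrt((1+item_A q k)*(1+q*item_A q k))))/(1-q)^+2.
Proof. by []. Qed.

Lemma Astep (q A : R) : 0 <= q -> q < 1 -> 0 <= A ->
  let s := Num.sqrt ((1+A)*(1+q*A)) in
  let A1 := ((1+q)*A + 2*(1+s))/(1-q)^+2 in
  [/\ 0 < A1, A <= A1, A + 2 + 2*s <= A1, 1 <= s & s^+2 = (1+A)*(1+q*A)].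
Proof.
move=> q0 q1 A0 s A1.
have hs : s^+2 = (1+A)*(1+q*A) by rewrite sqr_sqrtr // mulr_ge0 //; nra.
have s0 : 0 <= s by apply: sqrtr_ge0.
have s1 : 1 <= s by nra.
have p0 : 0 < (1-q)^+2 by rewrite exprn_gt0 // subr_gt0.
have num : A + 2 + 2*s <= A1.
  rewrite /A1 ler_pdivlMr //.
  have e1 : 0 <= (A+2+2*s)*(q*(2-q)) by apply: mulr_ge0; nra.
  have e2 : 0 <= q * A by apply: mulr_ge0.
  nra.
split => //; [lra|lra].
Qed.

Lemma Ageo (t A : R) : 0 <= t -> t < 1 -> 0 <= A ->
  let q := t^+2 in
  let s := Num.sqrt ((1+A)*(1+q*A)) in
  let A1 := ((1+q)*A + 2*(1+s))/(1-q)^+2 in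
  A <= A1 * (1-t)^+2 /\ 1 <= A1 * (1-t)^+2.
Proof.
move=> t0 t1 A0 q s A1.
have q0 : 0 <= q by rewrite /q sqr_ge0.
have q1 : q < 1 by rewrite /q; nra.
have [_ _ _ s1 hs] := @Astep _ _ q0 q1 A0.
rewrite -/s in s1 hs.
have t1' : 1 - t^+2 != 0 by rewrite subr_eq0 eq_sym lt_eqF //; nra.
have hX : A1*(1-t)^+2*(1+t)^+2 = (1+q)*A + 2 + 2*s.
  by rewrite /A1 /q; field.
have s0 : 0 <= s by apply: sqrtr_ge0.
have tA0 : 0 <= t*A by apply: mulr_ge0.
have hs' : (t*A)^+2 <= s^+2 by rewrite hs /q; nra.
have sA : t*A <= s.
  by move: hs'; rewrite -ler_sqrt ?sqrtr_sqr ?ger0_norm //; nra.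
have p0 : 0 < (1+t)^+2 by rewrite exprn_gt0 //; lra.
split.
  by rewrite -(ler_pM2r p0) hX /q; nra.
rewrite -(ler_pM2r p0) hX mul1r.
have e1 : (1+t)^+2 <= 4 by nra.
have e2 : 0 <= (1+q)*A by apply: mulr_ge0 => //; lra.
lra.
Qed.

Section Q.
Variable q : R.
Hypothesis q0 : 0 <= q.
Hypothesis q1 : q < 1.

Lemma A_ge0 k : 0 <= item_A q k.
Proof.
elim: k => [|k IH] //=.
by have [/ltW + _ _ _ _] := @Astep _ _ q0 q1 IH.
Qed.

Lemma A_le k : item_A q k <= item_A q k.+1.
Proof. by have [_ + _ _ _] := @Astep _ _ q0 q1 (A_ge0 k). Qed.

Lemma A_pos k : 0 < item_A q k.+1.
Proof. by have [+ _ _ _ _] := @Astep _ _ q0 q1 (A_ge0 k). Qed.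

Lemma A_sq k : (k%:R)^+2 <= item_A q k.
Proof.
elim: k => [|k IH]; first by rewrite expr0n /= lexx.
have [_ _ h3 h4 h5] := @Astep _ _ q0 q1 (A_ge0 k).
have A0 := A_ge0 k.
rewrite itemA_S; move: (item_A q k) A0 IH h3 h4 h5 => A A0 IH h3 h4 h5.
move: (Num.sqrt _) h3 h4 h5 => s h3 h4 h5.
have k0 : 0 <= k%:R :> R by rewrite ler0n.
have e0 : 0 <= q * A * (1 + A) by apply: mulr_ge0; [apply: mulr_ge0 | rewrite addr_ge0].
have e1 : 1 + A <= s^+2 by rewrite h5; nra.
have ks : 0 <= k%:R + s by lra.
have sk : k%:R <= s by nra.
rewrite -natr1; nra.
Qed.

Lemma A_geo k : 1 <= item_A q k.+1 * (1 - Num.sqrt q)^+(2*k.+1).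
Proof.
have t0 : 0 <= Num.sqrt q by apply: sqrtr_ge0.
have tq : Num.sqrt q ^+2 = q by rewrite sqr_sqrtr.
have t1 : Num.sqrt q < 1.
  have aux : forall t : R, 0 <= t -> t^+2 < 1 -> t < 1 by move=> t ? ?; nra.
  by apply: aux => //; rewrite tq.
have g := fun A => @Ageo (Num.sqrt q) A t0 t1; rewrite tq in g.
elim: k => [|k IH].
  by have [_ +] := g _ (A_ge0 0); rewrite muln1.
rewrite mulnS exprD mulrA.
have [h _] := g _ (A_ge0 k.+1).
apply: le_trans IH _; apply: ler_wpM2r => //.
by rewrite exprn_ge0 // subr_ge0 ltW.
Qed.
End Q.

Lemma dot0l (v : 'rV[R]_d) : dot 0 v = 0.
Proof. by rewrite /dot big1 // => i _; rewrite mxE mul0r. Qed.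

Lemma grad_min (mu L : R) (f : 'rV[R]_d -> R) g xs : 0 <= mu -> mu < L -> in_F mu L f g ->
  (forall x, f xs <= f x) -> g xs = 0.
Proof.
move=> mu0 muL [_ _ H] hmin.
have L0 : 0 < L by apply: le_lt_trans muL.
have [H2 _] := H (xs - L^-1 *: g xs) xs.
have hm := hmin (xs - L^-1 *: g xs).
have Hid : dot (g xs) (xs - L^-1 *: g xs - xs) + L/2 * sqnorm (xs - L^-1 *: g xs - xs)
   + 1/(2*L) * sqnorm (g xs) = 0.
  by flat; field; rewrite gt_eqF.
have hs : sqnorm (g xs) <= 0.
  have : 1/(2*L) * sqnorm (g xs) <= 0 by lra.
  by rewrite pmulr_rle0 // divr_gt0 // mulr_gt0.
have hs0 : \sum_(i < d) g xs ord0 i * g xs ord0 i = 0.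
  apply/eqP; rewrite eq_le hs /=; apply: sumr_ge0 => i _.
  by rewrite -expr2 sqr_ge0.
apply/rowP => j; rewrite mxE.
have hge : forall i : 'I_d, true -> 0 <= g xs ord0 i * g xs ord0 i.
  by move=> i _; rewrite -expr2 sqr_ge0.
have := psumr_eq0P hge hs0 (i:=j) isT.
by move/eqP; rewrite mulf_eq0 orbb => /eqP.
Qed.
End Aux.

Theorem theorem3 (R : realType) (d : nat) (mu L : R)
  (f : 'rV[R]_d -> R) (g : 'rV[R]_d -> 'rV[R]_d) (xstar x0 : 'rV[R]_d) (N : nat) :
  0 <= mu -> mu < L ->
  in_F mu L f g ->
  (forall x : 'rV[R]_d, f xstar <= f x) ->
  (1 <= N)%N ->
  let q := mu / L in
  let r0 := sqnorm (x0 - xstar) in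
  [/\ sqnorm (item_z mu L g x0 N - xstar) <= r0 / (1 + q * item_A q N),
      r0 / (1 + q * item_A q N)
        <= (1 - Num.sqrt q) ^+ (2 * N) / ((1 - Num.sqrt q) ^+ (2 * N) + q) * r0,
      item_psi mu L f g x0 xstar N <= L / ((1 - q) * item_A q N.+1) * r0,
      L / ((1 - q) * item_A q N.+1) * r0
        <= Num.min ((1 - Num.sqrt q) ^+ (2 * N.+1)) (1 / (N.+1%:R) ^+ 2)
           * (L / (1 - q)) * r0
    & forall k : nat, 0 <= item_psi mu L f g x0 xstar k].
Proof.
move=> mu0 muL hF hmin hN q r0.
have L0 : 0 < L by apply: le_lt_trans muL.
have q0 : 0 <= q by rewrite divr_ge0 // ltW.
have q1 : q < 1 by rewrite /q ltr_pdivrMr // mul1r.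
have gs0 : g xstar = 0 := grad_min mu0 muL hF hmin.
have r00 : 0 <= r0 by rewrite /r0 /sqnorm /dot sumr_ge0 // => i _; rewrite -expr2 sqr_ge0.
have psi0 : forall k, 0 <= item_psi mu L f g x0 xstar k.
  move=> k.
  have h := interp (item_y mu L g x0 k) xstar mu0 muL hF.
  rewrite gs0 dot0l subr0 in h.
  rewrite [item_y _ _ _ _ _ - xstar - _]addrAC in h.
  have -> : item_psi mu L f g x0 xstar k = f (item_y mu L g x0 k) - f xstar
     - 1/(2*L) * sqnorm (g (item_y mu L g x0 k))
     - mu/(2*(1-mu/L)) * sqnorm (item_y mu L g x0 k - L^-1 *: g (item_y mu L g x0 k) - xstar)
     by [].
  lra.
pose Phi k := (1 + q * item_A q k) * sqnorm (item_z mu L g x0 k - xstar)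
   + (1-q) * item_A q k / L * item_psi mu L f g x0 xstar k.-1.
have step : forall k, Phi k.+1 <= Phi k.
  move=> k.
  have [ha hbb hc] := scal q0 q1 (A_ge0 q0 q1 k).
  have hb : item_beta q k * ((1-q) * item_A q k.+1) = item_A q k.
    rewrite /item_beta divfK // mulf_neq0 // ?gt_eqF ?subr_gt0 //.
    exact: A_pos.
  have R2 := interp xstar (item_y mu L g x0 k) mu0 muL hF.
  rewrite gs0 in R2.
  case: k => [|k] in ha hbb hc hb R2 *.
    have := (@step_abs _ _ mu L q (item_A q 0) (item_A q 1) (item_beta q 0) (item_delta q 0)
      0 (f (item_y mu L g x0 0)) (f xstar)
      (item_z mu L g x0 0) (item_x mu L g x0 0) x0 0 (g (item_y mu L g x0 0)) xstar
      L0 erefl q0 q1 (A_ge0 q0 q1 0) (A_le q0 q1 0) hb ha hbb hc (or_introl erefl) R2).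
    move/le_trans; apply.
    by rewrite /Phi (_ : item_A q 0 = 0) // !(mulr0, mul0r, addr0).
  have hx : item_y mu L g x0 k = item_x mu L g x0 k.+1 + L^-1 *: g (item_y mu L g x0 k).
    by rewrite (_ : item_x mu L g x0 k.+1 = item_y mu L g x0 k - L^-1 *: g (item_y mu L g x0 k)) // subrK.
  have R1 := interp (item_y mu L g x0 k) (item_y mu L g x0 k.+1) mu0 muL hF.
  exact: (@step_abs _ _ mu L q (item_A q k.+1) (item_A q k.+2) (item_beta q k.+1) (item_delta q k.+1)
      (f (item_y mu L g x0 k)) (f (item_y mu L g x0 k.+1)) (f xstar)
      (item_z mu L g x0 k.+1) (item_x mu L g x0 k.+1) (item_y mu L g x0 k)
      (g (item_y mu L g x0 k)) (g (item_y mu L g x0 k.+1)) xstar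
      L0 erefl q0 q1 (A_ge0 q0 q1 _) (A_le q0 q1 _) hb ha hbb hc (or_intror (conj hx R1)) R2).
have Phi0 : Phi 0%N = r0 by rewrite /Phi /= !(mulr0, mul0r, addr0, mul1r).
have PhiN : forall k, Phi k <= r0.
  elim=> [|k IH]; first by rewrite Phi0.
  exact: le_trans (step k) IH.
case: N hN => // n _.
have hA := A_ge0 q0 q1 n.+1.
have hA1 := A_pos q0 q1 n.
have hA2 := A_pos q0 q1 n.+1.
have t0 : 0 <= Num.sqrt q by apply: sqrtr_ge0.
have tq : Num.sqrt q ^+2 = q by rewrite sqr_sqrtr.
have t1 : Num.sqrt q < 1.
  have aux : forall t : R, 0 <= t -> t^+2 < 1 -> t < 1 by move=> t ? ?; nra.
  by apply: aux => //; rewrite tq.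
have q1' : 1 - q != 0 by rewrite subr_eq0 eq_sym lt_eqF.
have L0' : L != 0 by rewrite gt_eqF.
have PN : (1 + q * item_A q n.+1) * sqnorm (item_z mu L g x0 n.+1 - xstar)
   + (1-q) * item_A q n.+1 / L * item_psi mu L f g x0 xstar n <= r0 := PhiN n.+1.
have PN1 : (1 + q * item_A q n.+2) * sqnorm (item_z mu L g x0 n.+2 - xstar)
   + (1-q) * item_A q n.+2 / L * item_psi mu L f g x0 xstar n.+1 <= r0 := PhiN n.+2.
have c1 : 0 <= (1 - q) * item_A q n.+1 / L.
  by apply: divr_ge0; [apply: mulr_ge0 => //; rewrite subr_ge0 ltW | rewrite ltW].
have c2 : 0 < (1 - q) * item_A q n.+2 / L.
  by apply: divr_gt0 => //; apply: mulr_gt0 => //; rewrite subr_gt0.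
have e1 := mulr_ge0 c1 (psi0 n).
have z2 : 0 <= sqnorm (item_z mu L g x0 n.+2 - xstar).
  by rewrite /sqnorm /dot sumr_ge0 // => i _; rewrite -expr2 sqr_ge0.
have e2 : 0 <= (1 + q * item_A q n.+2) * sqnorm (item_z mu L g x0 n.+2 - xstar).
  by apply: mulr_ge0 => //; have := mulr_ge0 q0 (A_ge0 q0 q1 n.+2); lra.
have qA : 0 < 1 + q * item_A q n.+1 by have := mulr_ge0 q0 hA; lra.
split.
- rewrite ler_pdivlMr //; lra.
- set P := (1 - Num.sqrt q) ^+ (2 * n.+1).
  have P0 : 0 < P by rewrite exprn_gt0 // subr_gt0.
  have geo : 1 <= item_A q n.+1 * P := A_geo q0 q1 n.
  have Pq : 0 < P + q by lra.
  rewrite -subr_ge0.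
  have -> : P / (P + q) * r0 - r0 / (1 + q * item_A q n.+1)
     = r0 * q * (item_A q n.+1 * P - 1) / ((P + q) * (1 + q * item_A q n.+1)).
    by field; rewrite !gt_eqF.
  apply: divr_ge0; first by apply: mulr_ge0; [apply: mulr_ge0|rewrite subr_ge0].
  by apply: mulr_ge0; rewrite ltW.
- have -> : L / ((1 - q) * item_A q n.+2) * r0 = r0 / ((1 - q) * item_A q n.+2 / L).
    by field; rewrite L0' q1' gt_eqF.
  rewrite ler_pdivlMr //; lra.
- have -> : L / ((1 - q) * item_A q n.+2) * r0 = (item_A q n.+2)^-1 * (L / (1 - q)) * r0.
    by field; rewrite q1' gt_eqF.
  rewrite -subr_ge0 -mulrBl -mulrBl; apply: mulr_ge0 => //.
  apply: mulr_ge0; last by rewrite divr_ge0 // ?subr_ge0 ltW.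
  rewrite subr_ge0.
  rewrite le_min; apply/andP; split.
    have geo := A_geo q0 q1 n.+1.
    by rewrite -div1r ler_pdivrMr // mulrC.
  have sq := A_sq q0 q1 n.+2.
  have s0 : 0 < (n.+2%:R : R) ^+ 2 by rewrite exprn_gt0 // ltr0n.
  rewrite -subr_ge0.
  have -> : 1 / (n.+2%:R : R) ^+ 2 - (item_A q n.+2)^-1
     = (item_A q n.+2 - (n.+2%:R : R) ^+ 2) / ((n.+2%:R : R) ^+ 2 * item_A q n.+2).
    by field; rewrite !gt_eqF.
  by apply: divr_ge0; rewrite ?subr_ge0 // mulr_ge0 // ltW.
- exact: psi0.
Qed.
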